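(* For every base $b\ge 2$ there exist infinitely many positive integers that are not $b$-wMRH numbers.
   Context: Fix a base $b\ge 2$. $s_b(N)$ is the sum of the base-$b$ digits of $N$. For a positive integer $X$, its reversal $X^R$ is the integer whose base-$b$ representation is that of $X$ written in reverse order (leading zeros of the result are dropped). A positive integer $N$ is a $b$-wMRH number if there exists an integer $A\ge 0$ such that $N=(A+s_b(N))\cdot(A+s_b(N))^R$. *)

(* Defs.v *)
From mathcomp Require Import all_boot.
Set Implicit Arguments. Unset Strict Implicit. Unset Printing Implicit Defensive.

(* Base-b digits of n, least significant first; fuel k >= n suffices since
   n strictly decreases when b >= 2. digits b 0 = [::]. *)
Fixpoint digits_aux (b k n : nat) : seq nat :=
  match k with
  | 0 => [::]
  | k'.+1 => if n == 0 then [::] else (n %% b) :: digits_aux b k' (n %/ b)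
  end.

Definition digits (b n : nat) : seq nat := digits_aux b n n.

Definition from_digits (b : nat) (s : seq nat) : nat :=
  foldr (fun d acc => d + b * acc) 0 s.

Definition digit_sum (b n : nat) : nat := sumn (digits b n).

(* X^R: reverse the base-b representation (leading zeros of the result
   disappear automatically when evaluating). *)
Definition reversal (b n : nat) : nat := from_digits b (rev (digits b n)).

Definition wMRH (b N : nat) : Prop :=
  0 < N /\ exists A : nat,
    N = (A + digit_sum b N) * reversal b (A + digit_sum b N).

(* Main.v *)
Require Import Defs.
From mathcomp Require Import all_boot.
From mathcomp Require Import zify.

Lemma from_digits_cat b s t :
  from_digits b (s ++ t) = from_digits b s + b ^ size s * from_digits b t.
Proof.
elim: s => [|x s IH] /=; first by rewrite mul1n.
rewrite IH expnS; lia.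
Qed.

Lemma reversal_ge b n : 2 <= b -> b <= n -> ~~ (b %| n) -> b <= reversal b n.
Proof.
move=> hb hbn hd.
have [k hk] : exists k, n = k.+2 by exists (n - 2); lia.
have n0 : (n == 0) = false by apply/negbTE; lia.
have q1 : 0 < n %/ b by rewrite divn_gt0 //; lia.
have q0 : (n %/ b == 0) = false by apply/negbTE; lia.
rewrite /reversal /digits.
have -> : digits_aux b n n = (n %% b) :: (n %/ b %% b) :: digits_aux b k (n %/ b %/ b).
  by rewrite {1}hk /= n0 q0.
rewrite rev_cons -cats1 from_digits_cat /=.
have r0 : 0 < n %% b by rewrite lt0n -/(dvdn b n); apply: hd.
have : b ^ 1 <= b ^ size (rev (n %/ b %% b :: digits_aux b k (n %/ b %/ b))).
  by rewrite leq_exp2l // size_rev.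
rewrite expn1 => h.
nia.
Qed.

Theorem proposition16 (b : nat) (hb : 2 <= b) :
  forall m : nat, exists N : nat, m < N /\ ~ wMRH b N.
Proof.
move=> m.
have [p hp pp] := prime_above (m + b).
exists p; split; first lia.
case=> _ [A].
set X := A + digit_sum b p.
move=> E.
have hX : X %| p by rewrite {1}E dvdn_mulr.
have p1 := prime_gt1 pp.
have hbp : ~~ (b %| p).
  apply/negP => hbd.
  case/primeP: pp => _ /(_ b hbd) /orP [/eqP|/eqP]; lia.
case/primeP: pp => _ /(_ X hX) /orP [/eqP X1|/eqP Xp].
  move: E; rewrite X1 /reversal /digits /=.
  rewrite modn_small //; lia.
have hbp2 : b <= p by lia.
have := reversal_ge b p hb hbp2 hbp.
move: E; rewrite Xp => E.
have hR : reversal b p = 1.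
  apply/eqP; rewrite -(eqn_pmul2l (_ : 0 < p)); last lia.
  by rewrite muln1 -E.
rewrite hR; lia.
Qed.
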